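(* Let $H$ and $G$ be real Hilbert spaces, $Z$ a nonempty closed convex subset of $H\times G$, $x_0\in H\times G$, $\{\lambda_n\}\subset(0,1]$, and $\{H_n\}$ closed convex subsets of $H\times G$ with $Z\subset H_n$ for all $n$. Consider the iteration: for $n=0,1,\dots$, $x_{n+1/2}=x_n+\lambda_n(P_{H_n}(x_n)-x_n)$ and $x_{n+1}=P_{H(x_0,x_n)\cap C_n}(x_0)$, where $C_0=H(x_0,x_{1/2})$ and, for $n\ge1$, $C_n$ is given by one of: (a) $C_n=H(x_n,x_{n+1/2})\cap H(x_{n-1},x_{(n-1)+1/2})$; (b) $C_n=H(x_n,x_{n+1/2})\cap H(x_0,x_{n-1})$; (c) $C_n=H(x_n,x_{n+1/2})\cap H(x_0,\tau_nx_n+(1-\tau_n)x_{n-1})$ with $\tau_n\in(0,1)$. Then in each case the following hold: 1. $Z\subset H(x_0,x_n)\cap C_n$ for all $n$; 2. $\|x_{n+1}-x_0\|\ge\|x_n-x_0\|$ for all $n$; 3. $\sum_n\|x_{n+1}-x_n\|^2<+\infty$; 4. $\sum_n\|x_{n+1/2}-x_n\|^2<+\infty$; 5. if every weak sequential cluster point of $\{x_n\}$ lies in $Z$, then $x_n\to P_Z(x_0)$ strongly.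
   Context: $H\times G$ has the product Hilbert structure. For $x,y\in H\times G$, $H(x,y):=\{h:\ \langle h-y\mid x-y\rangle\le 0\}$ ($H(x,x)$ is the whole space). $P_D$ is the metric projection onto a nonempty closed convex set $D$. *)

(* Defs.v *)
From HB Require Import structures.
From mathcomp Require Import all_boot all_order all_algebra.
From mathcomp Require Import all_classical all_reals all_analysis.
Set Implicit Arguments. Unset Strict Implicit. Unset Printing Implicit Defensive.
Import Order.TTheory GRing.Theory Num.Theory numFieldNormedType.Exports.
Local Open Scope ring_scope.
Local Open Scope classical_set_scope.

Section Hilbert.
Variables (R : realType) (V : lmodType R) (ip : V -> V -> R).

Definition hnorm (x : V) : R := Num.sqrt (ip x x).

Definition is_hilbert : Prop :=
  [/\ (forall x y, ip x y = ip y x),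
      (forall a x y z, ip (a *: x + y) z = a * ip x z + ip y z),
      (forall x, 0 <= ip x x),
      (forall x, ip x x = 0 -> x = 0) &
      (forall u : nat -> V,
        (forall e : R, 0 < e -> exists N, forall m n, (N <= m)%N -> (N <= n)%N ->
           hnorm (u m - u n) < e) ->
        exists l, (fun n => hnorm (u n - l)) @ \oo --> (0 : R))].

Definition strong_cvg (u : nat -> V) (l : V) : Prop :=
  (fun n => hnorm (u n - l)) @ \oo --> (0 : R).

Definition weak_cvg (u : nat -> V) (l : V) : Prop :=
  forall y, (fun n => ip (u n) y) @ \oo --> ip l y.

Definition weak_cluster (u : nat -> V) (w : V) : Prop :=
  exists phi : nat -> nat, (forall k, (phi k < phi k.+1)%N) /\
    weak_cvg (fun k => u (phi k)) w.

(** closed (in the norm topology; sequentially closed = closed in a metric space) *)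
Definition nclosed (D : set V) : Prop :=
  forall (u : nat -> V) l, (forall n, D (u n)) -> strong_cvg u l -> D l.

Definition hconvex (D : set V) : Prop :=
  forall x y (t : R), D x -> D y -> 0 <= t <= 1 -> D (t *: x + (1 - t) *: y).

Definition is_proj (D : set V) (x p : V) : Prop :=
  D p /\ forall d, D d -> hnorm (x - p) <= hnorm (x - d).

Definition Hs (x y : V) : set V := [set h | ip (h - y) (x - y) <= 0].

End Hilbert.

Definition prod_ip (R : realType) (H G : lmodType R)
  (ipH : H -> H -> R) (ipG : G -> G -> R) (p q : (H * G)%type) : R :=
  ipH p.1 q.1 + ipG p.2 q.2.

Inductive cut_rule := rule_a | rule_b | rule_c.

(** C_n ; C_0 = H(x0, x_{1/2});  xh n stands for x_{n+1/2} *)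
Definition Cset (R : realType) (V : lmodType R) (ip : V -> V -> R)
  (rule : cut_rule) (tau : nat -> R) (x0 : V) (x xh : nat -> V) (n : nat) : set V :=
  match n with
  | 0 => Hs ip x0 (xh 0)
  | m.+1 => Hs ip (x n) (xh n) `&`
      match rule with
      | rule_a => Hs ip (x m) (xh m)
      | rule_b => Hs ip x0 (x m)
      | rule_c => Hs ip x0 (tau n *: x n + (1 - tau n) *: x m)
      end
  end.

(* Main.v *)
Require Import Defs.
From HB Require Import structures.
From mathcomp Require Import all_boot all_order all_algebra.
From mathcomp Require Import all_classical all_reals all_analysis.
From mathcomp Require Import ring lra.
Import Order.TTheory GRing.Theory Num.Theory numFieldNormedType.Exports.
Local Open Scope ring_scope.
Local Open Scope classical_set_scope.
Set Implicit Arguments. Unset Strict Implicit. Unset Printing Implicit Defensive.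

Section RealSeq.
Variable R : realType.
Definition rcv (u : nat -> R) l := forall e : R, 0 < e -> exists N, forall n, (N <= n)%N -> `|u n - l| < e.
Definition rcauchy (u : nat -> R) := forall e : R, 0 < e -> exists N, forall m n, (N <= m)%N -> (N <= n)%N -> `|u m - u n| < e.
Lemma rcvP u l : rcv u l <-> u @ \oo --> l.
Proof.
split.
  move=> h; apply/cvgrPdist_lt => e e0; have [N hN] := h e e0.
  exists N => // n /= Nn; rewrite distrC; exact: hN.
move=> /cvgrPdist_lt h e e0; have [N _ hN] := h e e0.
by exists N => n Nn; rewrite distrC; apply: hN.
Qed.
Lemma rcv_cauchy u l : rcv u l -> rcauchy u.
Proof.
move=> h e e0; have e2 : 0 < e/2 by lra.
have [N hN] := h (e/2) e2.
exists N => m n hm hn; have := hN m hm; have := hN n hn.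
rewrite (_ : u m - u n = (u m - l) - (u n - l)); last by ring.
move=> h1 h2; apply: (le_lt_trans (ler_normB _ _)); lra.
Qed.
Lemma rcauchy_cv u : rcauchy u -> exists l, rcv u l.
Proof.
move=> h.
have : cvg (u @ \oo).
  apply/cauchy_cvgP; apply/cauchy_ballP => e e0.
  have [N hN] := h e e0.
  pose S := [set n | (N <= n)%N].
  exists (u @` S, u @` S).
    by split => /=; exists N => // n hn; exists n.
  by move=> [a b] [[m hm <-] [n hn <-]]; rewrite /ball /= distrC; apply: hN.
by move=> /cvg_ex [l hl]; exists l; apply/rcvP.
Qed.

Lemma rcv_unique (u : nat -> R) l1 l2 : rcv u l1 -> rcv u l2 -> l1 = l2.
Proof.
move=> h1 h2; apply/eqP; rewrite -subr_eq0; apply: contraT => hn.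
have e0 : 0 < `|l1 - l2| / 2 by rewrite divr_gt0 // normr_gt0.
have [N1 hN1] := h1 _ e0; have [N2 hN2] := h2 _ e0.
have := hN1 (maxn N1 N2) (leq_maxl _ _); have := hN2 (maxn N1 N2) (leq_maxr _ _).
set a := u _ => ha hb.
have := ler_normB (a - l2) (a - l1).
rewrite (_ : a - l2 - (a - l1) = l1 - l2); last by ring.
lra.
Qed.

Lemma rcv_lin (a : R) (f g : nat -> R) lf lg : rcv f lf -> rcv g lg ->
  rcv (fun k => a * f k + g k) (a * lf + lg).
Proof.
move=> hf hg e e0.
have a0 : 0 < `|a| + 1 by rewrite ltr_wpDl.
have e1 : 0 < e / (2 * (`|a| + 1)) by rewrite divr_gt0 // mulr_gt0.
have e2 : 0 < e / 2 by rewrite divr_gt0.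
have [N1 hN1] := hf _ e1; have [N2 hN2] := hg _ e2.
exists (maxn N1 N2) => n hn.
have h1 := hN1 n (leq_trans (leq_maxl _ _) hn).
have h2 := hN2 n (leq_trans (leq_maxr _ _) hn).
rewrite (_ : a * f n + g n - (a * lf + lg) = a * (f n - lf) + (g n - lg)); last by ring.
apply: (le_lt_trans (ler_normD _ _)); rewrite normrM.
have : `|a| * `|f n - lf| <= (`|a| + 1) * (e / (2 * (`|a| + 1))).
  apply: ler_pM => //; last exact: ltW.
  by rewrite lerDl.
rewrite (_ : (`|a| + 1) * (e / (2 * (`|a| + 1))) = e / 2); last by field; rewrite gt_eqF.
lra.
Qed.

Lemma rcv_le (u : nat -> R) l c : rcv u l -> (forall k, u k <= c) -> l <= c.
Proof.
move=> h hc; rewrite leNgt; apply/negP => lc.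
have lc0 : 0 < l - c by rewrite subr_gt0.
have [N hN] := h _ lc0.
have := hN N (leqnn N); have := hc N; rewrite ltr_norml => h1 /andP [h2 h3]; lra.
Qed.

Lemma rcv_ge (u : nat -> R) l c : rcv u l -> (forall k, c <= u k) -> c <= l.
Proof.
move=> h hc; rewrite leNgt; apply/negP => lc.
have lc0 : 0 < c - l by rewrite subr_gt0.
have [N hN] := h _ lc0.
have := hN N (leqnn N); have := hc N; rewrite ltr_norml => h1 /andP [h2 h3]; lra.
Qed.

Lemma rcv_ext (u v : nat -> R) l : (forall k, u k = v k) -> rcv u l -> rcv v l.
Proof. by move=> e; rewrite (funext e). Qed.

Lemma inc_ge (s : nat -> nat) : (forall k, (s k < s k.+1)%N) -> forall k, (k <= s k)%N.
Proof. by move=> h; elim=> // k ih; apply: (leq_ltn_trans ih). Qed.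

Lemma inc_lt (s : nat -> nat) : (forall k, (s k < s k.+1)%N) -> forall a b, (a < b)%N -> (s a < s b)%N.
Proof.
move=> h a; elim=> // b ih; rewrite ltnS leq_eqVlt => /orP [/eqP -> //|].
by move=> /ih hb; apply: (ltn_trans hb).
Qed.

Lemma sub_cauchy (a : nat -> R) (g d : nat -> nat) j :
  (forall k, (g k < g k.+1)%N) -> (forall k, (k <= d k)%N) ->
  (forall k, (j <= k)%N -> exists m, d k = g m) ->
  rcauchy (fun k => a (g k)) -> rcauchy (fun k => a (d k)).
Proof.
move=> gi dk dg h e e0; have [N hN] := h e e0.
have key : forall k, (maxn j (g N) <= k)%N -> exists2 m, (N <= m)%N & d k = g m.
  move=> k hk; have [m hm] := dg k (leq_trans (leq_maxl _ _) hk).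
  exists m => //; rewrite leqNgt; apply/negP => mN.
  have := inc_lt gi mN; rewrite -hm => h1.
  have := leq_trans (leq_maxr j (g N)) (leq_trans hk (dk k)).
  by rewrite leqNgt h1.
exists (maxn j (g N)) => m n hm hn.
have [m' hm' ->] := key m hm; have [n' hn' ->] := key n hn.
exact: hN.
Qed.

Lemma diagonal (c : nat -> nat -> R) :
  (forall p : nat * (nat -> nat), exists s : nat -> nat,
     (forall k, (s k < s k.+1)%N) /\ rcauchy (fun k => c p.1 (p.2 (s k)))) ->
  exists d : nat -> nat, (forall k, (d k < d k.+1)%N) /\ forall j, rcauchy (fun k => c j (d k)).
Proof.
move=> /choice [S hS].
pose Phi := fix F (j : nat) : nat -> nat :=
  match j with 0 => id | j'.+1 => F j' \o S (j', F j') end.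
have PhiS j : Phi j.+1 = Phi j \o S (j, Phi j) by [].
have Si j g k : (S (j, g) k < S (j, g) k.+1)%N by case: (hS (j, g)) => h _; apply: h.
have Phii : forall j k, (Phi j k < Phi j k.+1)%N.
  elim=> [//|j ih] k; rewrite PhiS /=; apply: inc_lt => //; exact: Si.
have PhiI : forall j i n, exists m, Phi (i + j)%N n = Phi j m.
  move=> j; elim=> [|i ih] n; first by exists n.
  rewrite addSn PhiS /=; exact: ih.
exists (fun k => Phi k.+1 k); split.
  move=> k; have -> : Phi k.+2 k.+1 = Phi k.+1 (S (k.+1, Phi k.+1) k.+1) by [].
  apply: inc_lt => //; exact: (leq_trans (ltnSn k) (inc_ge (Si _ _) _)).
move=> j; apply: (@sub_cauchy (c j) (Phi j.+1) _ j).
- exact: Phii.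
- move=> k; rewrite -ltnS; apply: (@leq_trans (Phi k.+1 k).+1); last by [].
  by rewrite ltnS; apply: inc_ge; exact: Phii.
- move=> k jk; have := PhiI j.+1 (k - j)%N k.
  by rewrite addnS subnK.
- by rewrite PhiS /=; case: (hS (j, Phi j)).
Qed.


Lemma refine_bw (a : nat -> R) (M : R) : (forall k, `|a k| <= M) ->
  exists s : nat -> nat, (forall k, (s k < s k.+1)%N) /\ rcauchy (fun k => a (s k)).
Proof.
move=> hM.
have bnd : bounded_fun a.
  exists M; split; first by rewrite num_real.
  move=> y My k _ /=; apply: (le_trans (hM k)); exact: ltW.
have [f fi fc] := bolzano_weierstrass bnd.
exists f; split.
  by move=> k; have /increasing_seqP := fi; apply.
have [l hl] := (cvg_ex _).1 fc.
by apply: (rcv_cauchy (l := l)); apply/rcvP; exact: hl.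
Qed.

Lemma rcv_cst (c : R) : rcv (fun _ => c) c.
Proof. by move=> e e0; exists 0%N => n _; rewrite subrr normr0. Qed.
End RealSeq.

Section Hil.
Variables (R : realType) (V : lmodType R) (ip : V -> V -> R).
Hypothesis hV : is_hilbert ip.

Lemma ipC x y : ip x y = ip y x. Proof. by case: hV. Qed.
Lemma ipDZl a x y z : ip (a *: x + y) z = a * ip x z + ip y z. Proof. by case: hV. Qed.
Lemma Q_ge0 x : 0 <= ip x x. Proof. by case: hV. Qed.
Lemma Q_eq0 x : ip x x = 0 -> x = 0. Proof. by case: hV => _ _ _ h _; apply: h. Qed.

Lemma ipDl x y z : ip (x + y) z = ip x z + ip y z.
Proof. by rewrite -{1}(scale1r x) ipDZl mul1r. Qed.
Lemma ip0l z : ip 0 z = 0.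
Proof. have := ipDl 0 0 z; rewrite addr0 => h; lra. Qed.
Lemma ipZl a x z : ip (a *: x) z = a * ip x z.
Proof. by rewrite -(addr0 (a *: x)) ipDZl ip0l addr0. Qed.
Lemma ipNl x z : ip (- x) z = - ip x z.
Proof. by rewrite -scaleN1r ipZl mulN1r. Qed.
Lemma ipBl x y z : ip (x - y) z = ip x z - ip y z.
Proof. by rewrite ipDl ipNl. Qed.
Lemma ipDr x y z : ip z (x + y) = ip z x + ip z y.
Proof. by rewrite ipC ipDl !(ipC z). Qed.
Lemma ip0r z : ip z 0 = 0.
Proof. by rewrite ipC ip0l. Qed.
Lemma ipZr a x z : ip z (a *: x) = a * ip z x.
Proof. by rewrite ipC ipZl (ipC z). Qed.
Lemma ipNr x z : ip z (- x) = - ip z x.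
Proof. by rewrite ipC ipNl (ipC z). Qed.
Lemma ipBr x y z : ip z (x - y) = ip z x - ip z y.
Proof. by rewrite ipDr ipNr. Qed.

Ltac ipsym f := repeat match goal with
  | |- context [f ?a ?b] => match goal with
      | |- context [f b a] => tryif constr_eq a b then fail else rewrite (_ : f b a = f a b); last by rewrite ipC
      end
  end.

Definition ipE := (ipDl, ipBl, ipNl, ipZl, ip0l, ipDr, ipBr, ipNr, ipZr, ip0r).

Lemma QD x y : ip (x + y) (x + y) = ip x x + 2 * ip x y + ip y y.
Proof. rewrite !ipE (ipC y x); ring. Qed.
Lemma QB x y : ip (x - y) (x - y) = ip x x - 2 * ip x y + ip y y.
Proof. rewrite !ipE (ipC y x); ring. Qed.
Lemma QN x : ip (- x) (- x) = ip x x.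
Proof. rewrite !ipE; ring. Qed.
Lemma QZ a x : ip (a *: x) (a *: x) = a ^+ 2 * ip x x.
Proof. rewrite !ipE; ring. Qed.
Lemma Qsym x y : ip (x - y) (x - y) = ip (y - x) (y - x).
Proof. by rewrite -QN opprB. Qed.

Lemma CS x y : ip x y ^+ 2 <= ip x x * ip y y.
Proof.
have [y0|yn0] := eqVneq (ip y y) 0.
  by rewrite (Q_eq0 y0) ip0r ip0r expr0n /= mulr0.
have yp : 0 < ip y y by rewrite lt_def yn0 Q_ge0.
set t := ip x y / ip y y.
have := Q_ge0 (x - t *: y); rewrite QB QZ ipZr.
have -> : t ^+ 2 * ip y y = t * ip x y.
  by rewrite /t; field.
rewrite (_ : ip x x - 2 * (t * ip x y) + t * ip x y = ip x x - t * ip x y); last by ring.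
rewrite subr_ge0 => h.
have -> : ip x y ^+ 2 = t * ip x y * ip y y by rewrite /t; field.
by rewrite ler_pM2r.
Qed.

Lemma hnorm_sq x : hnorm ip x ^+ 2 = ip x x.
Proof. by rewrite /hnorm sqr_sqrtr // Q_ge0. Qed.
Lemma hnorm_le x y : (hnorm ip x <= hnorm ip y) = (ip x x <= ip y y).
Proof. by rewrite /hnorm ler_sqrt // Q_ge0. Qed.
Lemma hnorm_lt x e : 0 < e -> (hnorm ip x < e) = (ip x x < e ^+ 2).
Proof.
move=> e0; rewrite /hnorm -{1}(gtr0_norm e0) -sqrtr_sqr ltr_sqrt // exprn_gt0 //.
Qed.

Definition scv (u : nat -> V) l := forall e : R, 0 < e -> exists N, forall n, (N <= n)%N ->
  ip (u n - l) (u n - l) < e.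

Lemma scvP u l : strong_cvg ip u l <-> scv u l.
Proof.
rewrite /strong_cvg -rcvP; split => h e e0.
  have se : 0 < Num.sqrt e by rewrite sqrtr_gt0.
  have [N hN] := h (Num.sqrt e) se.
  exists N => n /hN; rewrite subr0 ger0_norm ?sqrtr_ge0 // hnorm_lt ?sqrtr_gt0 //.
  by rewrite sqr_sqrtr // ltW.
have [N hN] := h (e ^+ 2) (exprn_gt0 _ e0).
by exists N => n /hN; rewrite subr0 ger0_norm ?sqrtr_ge0 // hnorm_lt.
Qed.

Lemma completeQ (u : nat -> V) :
  (forall e : R, 0 < e -> exists N, forall m n, (N <= m)%N -> (N <= n)%N ->
     ip (u m - u n) (u m - u n) < e) -> exists l, scv u l.
Proof.
move=> h; case: hV => _ _ _ _ /(_ u) [].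
  move=> e e0; have [N hN] := h (e ^+ 2) (exprn_gt0 _ e0).
  by exists N => m n hm hn; rewrite hnorm_lt //; apply: hN.
by move=> l hl; exists l; apply/scvP.
Qed.


Lemma Qexp d p x t : ip (x - (t *: d + (1 - t) *: p)) (x - (t *: d + (1 - t) *: p)) =
  ip (x - p) (x - p) - 2 * t * ip (d - p) (x - p) + t ^+ 2 * ip (d - p) (d - p).
Proof. rewrite !ipE; ipsym ip; ring. Qed.

Lemma proj_char D x p : hconvex D -> is_proj ip D x p -> forall d, D d -> ip (d - p) (x - p) <= 0.
Proof.
move=> cv [Dp hp] d Dd.
set c := ip (d - p) (x - p); set q := ip (d - p) (d - p).
rewrite leNgt; apply/negP => c0.
have q0 : 0 <= q by apply: Q_ge0.
set t := c / (c + q).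
have t0 : 0 < t by rewrite /t divr_gt0 // ltr_wpDr.
have tq : t * (c + q) = c by rewrite /t mulrVK // unitfE gt_eqF // ltr_wpDr.
have t1 : t <= 1.
  rewrite /t ler_pdivrMr ?mul1r ?lerDl // ltr_wpDr //.
have := hp (t *: d + (1 - t) *: p); rewrite hnorm_le.
move=> /(_ (cv d p t Dd Dp _)) h.
have {h} : ip (x - p) (x - p) <= ip (x - p) (x - p) - 2 * t * c + t ^+ 2 * q.
  by rewrite -Qexp; apply: h; rewrite t1 ltW.
nra.
Qed.

Lemma char_proj D x p : D p -> (forall d, D d -> ip (d - p) (x - p) <= 0) -> is_proj ip D x p.
Proof.
move=> Dp h; split => // d Dd; rewrite hnorm_le.
have := h d Dd; have := Q_ge0 (d - p).
have -> : x - d = (x - p) - (d - p) by rewrite opprB addrA subrK.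
rewrite (QB (x - p) (d - p)) (ipC (x - p)); lra.
Qed.

Lemma proj_ineq D x p d : hconvex D -> is_proj ip D x p -> D d ->
  ip (x - p) (x - p) + ip (d - p) (d - p) <= ip (x - d) (x - d).
Proof.
move=> cv hp Dd; have := proj_char cv hp Dd.
have -> : x - d = (x - p) - (d - p) by rewrite opprB addrA subrK.
rewrite (QB (x - p) (d - p)) (ipC (x - p)); lra.
Qed.

Lemma small_inv (e : R) : 0 < e -> exists N, forall n, (N <= n)%N -> 1 / (n.+1)%:R < e.
Proof.
move=> e0; have b0 : 0 <= 1 / e by rewrite divr_ge0 // ltW.
exists (Num.bound (1 / e)) => n hn.
have h1 := archi_boundP b0.
have h2 : (Num.bound (1 / e))%:R <= n%:R :> R by rewrite ler_nat.
have h3 : n%:R < (n.+1)%:R :> R by rewrite ltr_nat.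
rewrite ltr_pdivrMr ?ltr0Sn //.
have : 1 / e < n.+1%:R by lra.
by rewrite ltr_pdivrMr // mulrC.
Qed.

Lemma ip_small a (e : R) : 0 < e -> exists2 eta : R, 0 < eta & forall b, ip b b < eta -> `|ip a b| < e.
Proof.
move=> e0; have qa := Q_ge0 a.
exists (e ^+ 2 / (ip a a + 1)); first by rewrite divr_gt0 ?exprn_gt0 // ltr_wpDl.
move=> b hb; have qb := Q_ge0 b; have cs := CS a b.
have h : ip a a * ip b b < e ^+ 2.
  have : (ip a a + 1) * ip b b < e ^+ 2.
    by rewrite mulrC -ltr_pdivlMr // ltr_wpDl.
  nra.
rewrite ltr_norml; apply/andP; split; nra.
Qed.

Lemma parallelogram x a b : ip (a - b) (a - b) =
  2 * ip (x - a) (x - a) + 2 * ip (x - b) (x - b)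
  - 4 * ip (x - (2^-1 *: a + (1 - 2^-1) *: b)) (x - (2^-1 *: a + (1 - 2^-1) *: b)).
Proof. rewrite !ipE; ipsym ip; by field. Qed.

Lemma proj_exists D x : D !=set0 -> nclosed ip D -> hconvex D -> exists p, is_proj ip D x p.
Proof.
move=> Dne Dcl Dcv.
pose S := [set ip (x - d) (x - d) | d in D].
have hS : has_inf S.
  split; first by case: Dne => d Dd; exists (ip (x - d) (x - d)); exists d.
  by exists 0 => _ [d _ <-]; apply: Q_ge0.
set m := inf S.
have mlb : forall d, D d -> m <= ip (x - d) (x - d).
  by move=> d Dd; apply: (ge_inf hS.2); exists d.
have : forall n : nat, exists d, D d /\ ip (x - d) (x - d) < m + 1 / (n.+1)%:R.
  move=> n; have [_ [d Dd <-] h] := inf_adherent (divr_gt0 ltr01 (ltr0Sn R n)) hS.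
  by exists d.
move=> /choice [z hz].
have zD n : D (z n) by case: (hz n).
have zm n : ip (x - z n) (x - z n) < m + 1 / (n.+1)%:R by case: (hz n).
have [l hl] : exists l, scv z l.
  apply: completeQ => e e0.
  have e4 : 0 < e / 4 by rewrite divr_gt0.
  have [N hN] := small_inv e4.
  exists N => i j hi hj.
  rewrite (parallelogram x).
  have ht : (0 <= (2^-1 : R) <= 1) by apply/andP; split; lra.
  have hmid := mlb _ (Dcv _ _ _ (zD i) (zD j) ht).
  move: hmid (zm i) (zm j) (hN i hi) (hN j hj).
  set a := (1 / i.+1%:R : R); set b := (1 / j.+1%:R : R).
  set A := ip (x - (_ + _)) _; set B := ip (x - z i) _; set C := ip (x - z j) _.
  clearbody a b A B C m; lra.
have Dl : D l by apply: (Dcl z) => //; apply/scvP.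
exists l; split => // d Dd; rewrite hnorm_le.
have mx : ip (x - l) (x - l) <= m.
  rewrite leNgt; apply/negP => hlt.
  set dl := ip (x - l) (x - l) - m.
  have d0 : 0 < dl / 4 by rewrite divr_gt0 // subr_gt0.
  have [eta eta0 heta] := ip_small (x - l) d0.
  have [N1 hN1] := hl eta eta0.
  have [N2 hN2] := small_inv d0.
  pose n := maxn N1 N2.
  have h1 := heta _ (hN1 n (leq_maxl _ _)).
  have h2 := hN2 n (leq_maxr _ _).
  have h3 := zm n.
  have : x - z n = (x - l) - (z n - l) by rewrite opprB addrA subrK.
  move=> e; rewrite e (QB (x - l)) in h3.
  have := Q_ge0 (z n - l).
  move: h1; rewrite ltr_norml => /andP [h1 h1'].
  rewrite /dl in d0 h1 h1' h2.
  move: h2 h3; set a := (1 / n.+1%:R : R); clearbody a m; lra.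
by apply: (le_trans mx); apply: mlb.
Qed.

Lemma unif_small (M e : R) : 0 <= M -> 0 < e -> exists2 eta : R, 0 < eta &
  forall a b, ip a a <= M -> ip b b < eta -> `|ip a b| < e.
Proof.
move=> M0 e0; exists (e ^+ 2 / (M + 1)); first by rewrite divr_gt0 ?exprn_gt0 // ltr_wpDl.
move=> a b ha hb; have qb := Q_ge0 b; have qa := Q_ge0 a; have cs := CS a b.
have h : ip a a * ip b b < e ^+ 2.
  have : (M + 1) * ip b b < e ^+ 2.
    by rewrite mulrC -ltr_pdivlMr // ltr_wpDl.
  nra.
rewrite ltr_norml; apply/andP; split; nra.
Qed.

Lemma ip_bound a b (M : R) : ip a a <= M -> ip b b <= M -> `|ip a b| <= M.
Proof.
move=> ha hb; have qb := Q_ge0 b; have qa := Q_ge0 a; have cs := CS a b.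
have h : ip a b ^+ 2 <= M ^+ 2 by apply: (le_trans cs); rewrite expr2; apply: ler_pM.
rewrite ler_norml; apply/andP; split; nra.
Qed.

Lemma abs_le_sqrt (a t : R) : a ^+ 2 <= t -> `|a| <= Num.sqrt t.
Proof.
move=> h; rewrite -sqrtr_sqr ler_sqrt //; apply: (le_trans _ h); exact: sqr_ge0.
Qed.

Lemma weak_compact (u : nat -> V) (M : R) : (forall n, ip (u n) (u n) <= M) ->
  exists phi : nat -> nat, (forall k, (phi k < phi k.+1)%N) /\
  exists w, forall y, rcv (fun k => ip (u (phi k)) y) (ip w y).
Proof.
move=> uM.
have M0 : 0 <= M by apply: (le_trans (Q_ge0 (u 0%N))).
have [d [di dc]] := @diagonal R (fun j n => ip (u n) (u j)) (fun p =>
   @refine_bw R (fun k => ip (u (p.2 k)) (u p.1)) M (fun k => ip_bound (uM _) (uM _))).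
exists d; split => //.
pose v k := u (d k).
have vM k : ip (v k) (v k) <= M by apply: uM.
pose S := [set y | rcauchy (fun k => ip (v k) y)].
have Su j : S (u j) by apply: dc.
have Slin a y z : S y -> S z -> S (a *: y + z).
  move=> /rcauchy_cv [ly hy] /rcauchy_cv [lz hz].
  rewrite /S /= (_ : (fun k => ip (v k) (a *: y + z)) = fun k => a * ip (v k) y + ip (v k) z).
    exact: rcv_cauchy (rcv_lin a hy hz).
  by apply: funext => k; rewrite ipDr ipZr.
have S0 : S 0 by have := Slin (-1) (u 0%N) (u 0%N) (Su _) (Su _); rewrite scaleN1r addNr.
have Scv : hconvex S.
  move=> y z t Sy Sz _; apply: (Slin t) => //.
  by have := Slin (1 - t) z 0 Sz S0; rewrite addr0.
have Scl : nclosed ip S.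
  move=> z l hz /scvP hl e e0.
  have e3 : 0 < e / 3 by rewrite divr_gt0.
  have [eta eta0 heta] := unif_small M0 e3.
  have [i hi] := hl eta eta0.
  have hi' : ip (l - z i) (l - z i) < eta by rewrite Qsym; apply: hi.
  have [N hN] := hz i _ e3.
  exists N => m n hm hn.
  have h1 := heta _ _ (vM m) hi'; have h2 := heta _ _ (vM n) hi'.
  have h3 := hN m n hm hn.
  have -> : ip (v m) l - ip (v n) l =
     ip (v m) (l - z i) + (ip (v m) (z i) - ip (v n) (z i)) - ip (v n) (l - z i).
    rewrite !ipBr; ring.
  apply: (le_lt_trans (ler_normB _ _)).
  have := ler_normD (ip (v m) (l - z i)) (ip (v m) (z i) - ip (v n) (z i)).
  lra.
have Sall y : S y.
  have [q [Sq hq]] := proj_exists y (ex_intro _ 0 S0) Scl Scv.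
  have orth s : S s -> ip s (y - q) = 0.
    move=> Ss.
    have h1 := proj_char Scv (conj Sq hq) (Slin 1 q s Sq Ss).
    have h2 := proj_char Scv (conj Sq hq) (Slin (-1) s q Ss Sq).
    rewrite scale1r (addrC q s) addrK in h1.
    rewrite scaleN1r addrK ipNl in h2.
    lra.
  rewrite /S /= (_ : (fun k => ip (v k) y) = fun k => ip (v k) q).
    exact: Sq.
  apply: funext => k; have := orth _ (Su (d k)).
  rewrite ipBr /v => h; lra.
have : forall y, exists l, rcv (fun k => ip (v k) y) l.
  by move=> y; apply: rcauchy_cv; apply: Sall.
move=> /choice [f hf].
have flin a y z : f (a *: y + z) = a * f y + f z.
  apply: rcv_unique (hf _) _; apply: rcv_ext (rcv_lin a (hf y) (hf z)) => k.
  by rewrite ipDr ipZr.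
have f0 : f 0 = 0.
  have := flin 1 0 0; rewrite scale1r addr0 mul1r => h; lra.
have fD y z : f (y + z) = f y + f z by rewrite -(scale1r y) flin mul1r scale1r.
have fZ a y : f (a *: y) = a * f y by rewrite -(addr0 (a *: y)) flin f0 addr0.
have fB y z : f (y - z) = f y - f z by rewrite -scaleN1r fD fZ mulN1r.
have fb y : f y ^+ 2 <= M * ip y y.
  have hk k : `|ip (v k) y| <= Num.sqrt (M * ip y y).
    apply: abs_le_sqrt; apply: (le_trans (CS _ _)); apply: ler_wpM2r => //; exact: Q_ge0.
  have l1 := rcv_le (hf y) (fun k => le_trans (ler_norm _) (hk k)).
  have l2 : - Num.sqrt (M * ip y y) <= f y.
    by apply: (rcv_ge (hf y)) => k; have := hk k; rewrite ler_norml => /andP [].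
  have : Num.sqrt (M * ip y y) ^+ 2 = M * ip y y by rewrite sqr_sqrtr // mulr_ge0 // Q_ge0.
  have := sqrtr_ge0 (M * ip y y).
  nra.
case: (pselect (forall y, f y = 0)) => [fz | /existsNP [y0 fy0]].
  by exists 0 => y; rewrite ip0l -(fz y); apply: hf.
pose A := [set y | f y = 1].
have Ane : A !=set0.
  exists ((f y0)^-1 *: y0); rewrite /A /= fZ mulVf //; exact/eqP.
have Acv : hconvex A.
  by move=> y z t; rewrite /A /= fD !fZ => -> -> _; ring.
have Acl : nclosed ip A.
  move=> z l hz /scvP hl; rewrite /A /=; apply: contrapT => hne.
  have dl : 0 < (f l - 1) ^+ 2 / (M + 1).
    rewrite divr_gt0 ?ltr_wpDl // lt_def sqr_ge0 andbT sqrf_eq0 subr_eq0.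
    by apply/eqP.
  have [i hi] := hl _ dl.
  have := fb (l - z i); rewrite fB hz Qsym.
  have := Q_ge0 (z i - l).
  have := hi i (leqnn i); rewrite ltr_pdivlMr ?ltr_wpDl // => hi'.
  lra.
have [ys [Ays hys]] := proj_exists 0 Ane Acl Acv.
have fys : f ys = 1 by [].
have orth k : f k = 0 -> ip k ys = 0.
  move=> fk0.
  have A1 : A (1 *: k + ys) by rewrite /A /= flin fk0 fys; ring.
  have A2 : A ((-1) *: k + ys) by rewrite /A /= flin fk0 fys; ring.
  have h1 := proj_char Acv (conj Ays hys) A1.
  have h2 := proj_char Acv (conj Ays hys) A2.
  rewrite scale1r addrK sub0r ipNr in h1.
  rewrite scaleN1r addrK sub0r ipNr ipNl in h2.
  lra.
have Qys : ip ys ys != 0.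
  apply/eqP => h; have e := Q_eq0 h.
  by move: fys; rewrite e f0 => /eqP; rewrite eq_sym oner_eq0.
exists ((ip ys ys)^-1 *: ys) => y.
have key : ip y ys = f y * ip ys ys.
  have := orth (y - f y *: ys); rewrite fB fZ fys mulr1 subrr ipBl ipZl => /(_ erefl) h.
  lra.
rewrite ipZl (ipC ys y) key mulrCA mulVf // mulr1.
exact: hf.
Qed.

Lemma series_cvg_bound (f : nat -> R) (B : R) : (forall n, 0 <= f n) ->
  (forall n, series f n <= B) -> cvg (series f @ \oo).
Proof.
move=> f0 fB; apply: nondecreasing_is_cvgn.
  by apply/nondecreasing_seqP => n; rewrite seriesSr lerDl.
by exists B => _ [n _ <-].
Qed.

Lemma Hs_conv a b : hconvex (Hs ip a b).
Proof.
move=> y z t; rewrite /Hs /= => hy hz /andP [t0 t1].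
have -> : ip (t *: y + (1 - t) *: z - b) (a - b) =
  t * ip (y - b) (a - b) + (1 - t) * ip (z - b) (a - b) by rewrite !ipE; ring.
nra.
Qed.

Lemma conv_inter (A B : set V) : hconvex A -> hconvex B -> hconvex (A `&` B).
Proof. by move=> hA hB y z t [Ay By] [Az Bz] ht; split; [apply: hA|apply: hB]. Qed.

Lemma Cset_conv rule tau x0 x xh n : hconvex (Cset ip rule tau x0 x xh n).
Proof.
case: n => [|m] /=; first exact: Hs_conv.
by apply: conv_inter; first exact: Hs_conv; case: rule; apply: Hs_conv.
Qed.

Lemma Hs_self a h : Hs ip a a h.
Proof. by rewrite /Hs /= subrr ip0r. Qed.

Lemma half_in (D : set V) xn p (lam : R) z : hconvex D -> is_proj ip D xn p -> 0 < lam <= 1 ->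
  D z -> Hs ip xn (xn + lam *: (p - xn)) z.
Proof.
move=> cv hp /andP [l0 l1] Dz; rewrite /Hs /=.
have c := proj_char cv hp Dz.
have q := Q_ge0 (xn - p).
have -> : ip (z - (xn + lam *: (p - xn))) (xn - (xn + lam *: (p - xn))) =
  lam * ip (z - p) (xn - p) - lam * (1 - lam) * ip (xn - p) (xn - p).
  by rewrite !ipE; ipsym ip; ring.
have h1 : 0 <= lam * (1 - lam) * ip (xn - p) (xn - p).
  by rewrite mulr_ge0 // mulr_ge0 // ?subr_ge0 // ltW.
have h2 : lam * ip (z - p) (xn - p) <= 0 by rewrite mulr_ge0_le0 // ltW.
lra.
Qed.

Lemma rulec_in x0 a b (t : R) z : 0 < t < 1 -> Hs ip x0 a z -> Hs ip x0 b z ->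
  Hs ip x0 (t *: a + (1 - t) *: b) z.
Proof.
rewrite /Hs /= => /andP [t0 t1] ha hb.
have q := Q_ge0 (a - b).
have -> : ip (z - (t *: a + (1 - t) *: b)) (x0 - (t *: a + (1 - t) *: b)) =
  t * ip (z - a) (x0 - a) + (1 - t) * ip (z - b) (x0 - b) - t * (1 - t) * ip (a - b) (a - b).
  by rewrite !ipE; ipsym ip; ring.
have h1 : 0 <= t * (1 - t) * ip (a - b) (a - b).
  by rewrite mulr_ge0 // mulr_ge0 // ?subr_ge0 // ltW.
have h2 : t * ip (z - a) (x0 - a) <= 0 by rewrite mulr_ge0_le0 // ltW.
have h3 : (1 - t) * ip (z - b) (x0 - b) <= 0 by rewrite mulr_ge0_le0 // subr_ge0 ltW.
lra.
Qed.

Lemma hs_ineq a b c : ip (a - b) (c - b) <= 0 ->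
  ip (c - b) (c - b) + ip (a - b) (a - b) <= ip (a - c) (a - c).
Proof.
move=> h; have -> : a - c = (a - b) - (c - b) by rewrite opprB addrA subrK.

have e := QB (a - b) (c - b). lra.
Qed.

Lemma Q2 a b : ip (a + b) (a + b) <= 2 * ip a a + 2 * ip b b.
Proof. have := Q_ge0 (a - b); rewrite (QD a b) (QB a b); lra. Qed.

Lemma main_gen (Z : set V)
  (Z_ne : Z !=set0) (Z_cl : nclosed ip Z) (Z_cv : hconvex Z)
  (x0 : V) (lam : nat -> R) (lam_in : forall n, 0 < lam n <= 1)
  (Hn : nat -> set V)
  (Hn_cl : forall n, nclosed ip (Hn n))
  (Hn_cv : forall n, hconvex (Hn n))
  (ZHn : forall n, Z `<=` Hn n)
  (rule : cut_rule) (tau : nat -> R)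
  (tau_in : rule = rule_c -> forall n, (0 < n)%N -> 0 < tau n < 1)
  (x xh : nat -> V)
  (x_0 : x 0%N = x0)
  (step_half : forall n, exists p, is_proj ip (Hn n) (x n) p /\
                 xh n = x n + lam n *: (p - x n))
  (step : forall n, is_proj ip
            (Hs ip x0 (x n) `&` Cset ip rule tau x0 x xh n)
            x0 (x n.+1)) :
  [/\ (forall n, Z `<=` Hs ip x0 (x n) `&` Cset ip rule tau x0 x xh n),
      (forall n, hnorm ip (x n - x0) <= hnorm ip (x n.+1 - x0)),
      cvg (series (fun n => hnorm ip (x n.+1 - x n) ^+ 2) @ \oo),
      cvg (series (fun n => hnorm ip (xh n - x n) ^+ 2) @ \oo) &
      ((forall w, weak_cluster ip x w -> Z w) ->
        forall p, is_proj ip Z x0 p -> strong_cvg ip x p)].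
Proof.
pose P n := Hs ip x0 (x n) `&` Cset ip rule tau x0 x xh n.
have Pcv n : hconvex (P n) by apply: conv_inter; [exact: Hs_conv|exact: Cset_conv].
have hhalf n : Z `<=` Hs ip (x n) (xh n).
  move=> z Zz; have [p [hp ->]] := step_half n.
  exact: half_in (Hn_cv n) hp (lam_in n) (ZHn n z Zz).
have xP n : P n (x n.+1) by case: (step n).
have nextHs n : Z `<=` P n -> Z `<=` Hs ip x0 (x n.+1).
  by move=> hZ z Zz; apply: (proj_char (Pcv n) (step n)); apply: hZ.
have toP n : Z `<=` Hs ip x0 (x n) -> (forall m, n = m.+1 -> Z `<=` Hs ip x0 (x m)) ->
    Z `<=` P n.
  move=> h1 h2 z Zz; split; first exact: h1.
  case: n h1 h2 => [|m] h1 h2 /=.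
    by rewrite -{1}x_0; apply: hhalf.
  split; first exact: hhalf.
  case E: rule.
  - exact: hhalf.
  - exact: h2.
  - apply: rulec_in; first exact: tau_in.
      exact: h1.
    exact: h2.
have ZHs : forall n, Z `<=` Hs ip x0 (x n) /\ Z `<=` Hs ip x0 (x n.+1).
  elim=> [|n [ih1 ih2]].
    have h0 : Z `<=` Hs ip x0 (x 0%N) by move=> z _; rewrite x_0; apply: Hs_self.
    split => //; apply: nextHs; apply: toP => // m.
  split => //; apply: nextHs; by apply: toP => // m [e]; rewrite -e.
have part1 n : Z `<=` P n.
  by case: (ZHs n) => h1 _; apply: toP => // m _; case: (ZHs m).
have Qb z n : Z z -> ip (x n - x0) (x n - x0) <= ip (z - x0) (z - x0).
  move=> Zz; case: n => [|n].
    by rewrite x_0 subrr ip0r Q_ge0.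
  have := (step n).2 z (part1 n _ Zz); rewrite hnorm_le.
  by rewrite (Qsym x0) (Qsym x0).
have mono n : ip (x0 - x n) (x0 - x n) + ip (x n.+1 - x n) (x n.+1 - x n) <=
    ip (x n.+1 - x0) (x n.+1 - x0).
  by apply: hs_ineq; case: (xP n).
have [z0 Zz0] := Z_ne.
have sum1 n : series (fun n => hnorm ip (x n.+1 - x n) ^+ 2) n <= ip (x n - x0) (x n - x0).
  elim: n => [|n ih]; first by rewrite /series /= big_geq // Q_ge0.
  rewrite seriesSr hnorm_sq; have := mono n; rewrite (Qsym x0); lra.
have halfb n : hnorm ip (xh n - x n) ^+ 2 <= hnorm ip (x n.+1 - x n) ^+ 2.
  rewrite !hnorm_sq.
  have hin : Hs ip (x n) (xh n) (x n.+1).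
    case: n => [|n]; last by case: (xP n.+1) => _ [].
    by case: (xP 0%N) => _; rewrite /= x_0.
  have := hs_ineq hin; rewrite (Qsym (xh n)); have := Q_ge0 (x n.+1 - xh n); lra.
have sum2 n : series (fun n => hnorm ip (xh n - x n) ^+ 2) n <=
              series (fun n => hnorm ip (x n.+1 - x n) ^+ 2) n.
  elim: n => [|n ih]; first by rewrite /series /= !big_geq.
  rewrite !seriesSr; have := halfb n; lra.
split.
- exact: part1.
- by move=> n; rewrite hnorm_le; have := mono n; have := Q_ge0 (x n.+1 - x n); rewrite (Qsym x0); lra.
- apply: (@series_cvg_bound _ (ip (z0 - x0) (z0 - x0))); first by move=> n; exact: sqr_ge0.
  by move=> n; apply: (le_trans (sum1 n)); apply: Qb.
- apply: (@series_cvg_bound _ (ip (z0 - x0) (z0 - x0))); first by move=> n; exact: sqr_ge0.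
  by move=> n; apply: (le_trans (sum2 n)); apply: (le_trans (sum1 n)); apply: Qb.
move=> hw p hp.
have Zp : Z p by case: hp.
set r2 := ip (p - x0) (p - x0).
have xb n : ip (x n - x0) (x n - x0) <= r2 by apply: Qb.
have xM n : ip (x n) (x n) <= 2 * r2 + 2 * ip x0 x0.
  have := Q2 (x n - x0) x0; rewrite subrK; have := xb n; lra.
apply/scvP => e e0; apply: contrapT => hN.
have hinf N : exists n, (N <= n)%N /\ e <= ip (x n - p) (x n - p).
  apply: contrapT => h; apply: hN; exists N => n hn; rewrite ltNge; apply/negP => he.
  by apply: h; exists n.
move: hinf => /choice [nx hnx].
pose g := fix g k := match k with 0%N => nx 0%N | k'.+1 => nx (g k').+1 end.
have gi k : (g k < g k.+1)%N by case: (hnx (g k).+1).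
have ge k : e <= ip (x (g k) - p) (x (g k) - p).
  by case: k => [|k]; [case: (hnx 0%N) => _ h; exact: h|case: (hnx (g k).+1) => _ h; exact: h].
have [phi [phii [w hwc]]] := @weak_compact (fun k => x (g k)) _ (fun k => xM (g k)).
pose s k := x (g (phi k)).
have Zw : Z w.
  apply: hw; exists (fun k => g (phi k)); split.
    by move=> k; apply: (inc_lt gi); exact: phii.
  by move=> y; apply/rcvP; exact: hwc y.
have wcv y : rcv (fun k => ip (s k - x0) y) (ip (w - x0) y).
  rewrite (_ : ip (w - x0) y = 1 * ip w y + - ip x0 y); last by rewrite ipBl; ring.
  by apply: rcv_ext (rcv_lin 1 (hwc y) (rcv_cst _)) => k /=; rewrite ipBl; ring.
have Qw : ip (w - x0) (w - x0) <= r2.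
  set q := ip (w - x0) (w - x0).
  have hk k : `|ip (s k - x0) (w - x0)| <= Num.sqrt (r2 * q).
    apply: abs_le_sqrt; apply: (le_trans (CS _ _)); apply: ler_wpM2r; [exact: Q_ge0| exact: xb].
  have l1 := rcv_le (wcv (w - x0)) (fun k => le_trans (ler_norm _) (hk k)).
  have q0 : 0 <= q by apply: Q_ge0.
  have r0 : 0 <= r2 by apply: Q_ge0.
  have sq : Num.sqrt (r2 * q) ^+ 2 = r2 * q by rewrite sqr_sqrtr // mulr_ge0.
  have := sqrtr_ge0 (r2 * q).
  move: l1 sq; set c := Num.sqrt (r2 * q); clearbody c => l1 sq c0.
  have hqq : q * q <= r2 * q by rewrite -sq expr2; apply: ler_pM.
  move: q0; rewrite le_eqVlt => /orP [/eqP <- //|qp].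
  by rewrite -(ler_pM2r qp).
have wp : w = p.
  have h1 : ip (x0 - p) (x0 - p) <= ip (x0 - w) (x0 - w) by rewrite -hnorm_le; case: hp => _; apply.
  have ht : (0 <= (2^-1 : R) <= 1) by apply/andP; split; lra.
  have Zm := Z_cv _ _ _ Zw Zp ht.
  have h2 : ip (x0 - p) (x0 - p) <= ip (x0 - (2^-1 *: w + (1 - 2^-1) *: p))
      (x0 - (2^-1 *: w + (1 - 2^-1) *: p)) by rewrite -hnorm_le; case: hp => _; apply.
  have e' := parallelogram x0 w p.
  have : ip (w - p) (w - p) = 0.
    rewrite /r2 (Qsym w x0) (Qsym p x0) in Qw.
    apply/eqP; rewrite eq_le Q_ge0 andbT; move: Qw h1 h2 e'.
    set A := ip (x0 - (_ + _)) _; set B := ip (x0 - w) _; set C := ip (x0 - p) _.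
    move=> *; lra.
  by move=> /Q_eq0 /eqP; rewrite subr_eq0 => /eqP.
have pcv := wcv (p - x0); rewrite wp in pcv.
have e4 : 0 < e / 4 by rewrite divr_gt0.
have [N hN1] := pcv _ e4.
have := hN1 N (leqnn N); have := ge (phi N).
have -> : x (g (phi N)) - p = (s N - x0) - (p - x0) by rewrite /s opprB addrA subrK.
rewrite (QB (s N - x0) (p - x0)) -/r2 ltr_norml => h /andP [h1 h2].
have := xb (g (phi N)); rewrite -/(s N).
lra.
Qed.
End Hil.

Lemma sqrt_lt_of (R : realType) (a e : R) : 0 < e -> a < e ^+ 2 -> Num.sqrt a < e.
Proof. by move=> e0 h; rewrite -(gtr0_norm e0) -sqrtr_sqr ltr_sqrt // exprn_gt0. Qed.

Lemma prod_hilbert (R : realType) (H G : lmodType R)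
  (ipH : H -> H -> R) (ipG : G -> G -> R) :
  is_hilbert ipH -> is_hilbert ipG -> is_hilbert (prod_ip ipH ipG).
Proof.
move=> hH hG; split.
- by move=> p q; rewrite /prod_ip (ipC hH) (ipC hG).
- by move=> a p q r; rewrite /prod_ip /= (ipDZl hH) (ipDZl hG); ring.
- by move=> p; rewrite /prod_ip addr_ge0 // Q_ge0.
- case=> a b; rewrite /prod_ip /= => h.
  have h1 := Q_ge0 hH a; have h2 := Q_ge0 hG b.
  have ea : ipH a a = 0 by lra.
  have eb : ipG b b = 0 by lra.
  by rewrite (Q_eq0 hH ea) (Q_eq0 hG eb).
- move=> u hc.
  have c1 : forall e : R, 0 < e -> exists N, forall m n, (N <= m)%N -> (N <= n)%N ->
      hnorm ipH ((u m).1 - (u n).1) < e.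
    move=> e e0; have [N hN] := hc e e0; exists N => m n hm hn.
    apply: le_lt_trans (hN m n hm hn); rewrite /hnorm ler_sqrt; last first.
      by rewrite /prod_ip addr_ge0 // Q_ge0.
    by rewrite /prod_ip /= lerDl Q_ge0.
  have c2 : forall e : R, 0 < e -> exists N, forall m n, (N <= m)%N -> (N <= n)%N ->
      hnorm ipG ((u m).2 - (u n).2) < e.
    move=> e e0; have [N hN] := hc e e0; exists N => m n hm hn.
    apply: le_lt_trans (hN m n hm hn); rewrite /hnorm ler_sqrt; last first.
      by rewrite /prod_ip addr_ge0 // Q_ge0.
    by rewrite /prod_ip /= lerDr Q_ge0.
  have [l1 h1] := (match hH with And5 _ _ _ _ c => c end) _ c1.
  have [l2 h2] := (match hG with And5 _ _ _ _ c => c end) _ c2.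
  have {}h1 := (scvP ipH (fun n => (u n).1) l1).1 h1.
  have {}h2 := (scvP ipG (fun n => (u n).2) l2).1 h2.
  exists (l1, l2); rewrite -rcvP => e e0.
  have e2 : 0 < e ^+ 2 / 2 by rewrite divr_gt0 // exprn_gt0.
  have [N1 hN1] := h1 _ e2; have [N2 hN2] := h2 _ e2.
  exists (maxn N1 N2) => n hn; rewrite subr0 ger0_norm ?sqrtr_ge0 //.
  apply: sqrt_lt_of => //; rewrite /prod_ip /=.
  have := hN1 n (leq_trans (leq_maxl _ _) hn); have := hN2 n (leq_trans (leq_maxr _ _) hn).
  lra.
Qed.

Unset Implicit Arguments.

Theorem proposition8 (R : realType) (H G : lmodType R)
  (ipH : H -> H -> R) (ipG : G -> G -> R)
  (hH : is_hilbert ipH) (hG : is_hilbert ipG)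
  (Z : set (H * G)%type)
  (Z_ne : Z !=set0) (Z_cl : nclosed (prod_ip ipH ipG) Z) (Z_cv : hconvex Z)
  (x0 : (H * G)%type) (lam : nat -> R) (lam_in : forall n, 0 < lam n <= 1)
  (Hn : nat -> set (H * G)%type)
  (Hn_cl : forall n, nclosed (prod_ip ipH ipG) (Hn n))
  (Hn_cv : forall n, hconvex (Hn n))
  (ZHn : forall n, Z `<=` Hn n)
  (rule : cut_rule) (tau : nat -> R)
  (tau_in : rule = rule_c -> forall n, (0 < n)%N -> 0 < tau n < 1)
  (x xh : nat -> (H * G)%type)
  (x_0 : x 0%N = x0)
  (step_half : forall n, exists p, is_proj (prod_ip ipH ipG) (Hn n) (x n) p /\
                 xh n = x n + lam n *: (p - x n))
  (step : forall n, is_proj (prod_ip ipH ipG)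
            (Hs (prod_ip ipH ipG) x0 (x n) `&` Cset (prod_ip ipH ipG) rule tau x0 x xh n)
            x0 (x n.+1)) :
  let ip := prod_ip ipH ipG in
  [/\ (forall n, Z `<=` Hs ip x0 (x n) `&` Cset ip rule tau x0 x xh n),
      (forall n, hnorm ip (x n - x0) <= hnorm ip (x n.+1 - x0)),
      cvg (series (fun n => hnorm ip (x n.+1 - x n) ^+ 2) @ \oo),
      cvg (series (fun n => hnorm ip (xh n - x n) ^+ 2) @ \oo) &
      ((forall w, weak_cluster ip x w -> Z w) ->
        forall p, is_proj ip Z x0 p -> strong_cvg ip x p)].
Proof.
move=> ip.
have hP : is_hilbert ip by apply: prod_hilbert.
exact: (main_gen hP Z_ne Z_cl Z_cv lam_in Hn_cl Hn_cv ZHn tau_in x_0 step_half step).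
Qed.
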